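(* Let $w$ be a perfectly clustering Lyndon word over a totally ordered alphabet, with a palindromic special factorization $w=a_1\pi_1a_2\pi_2\cdots\pi_{k-1}a_k$. Let $s\in\{1,\dots,k-1\}$. If $\pi_s$ is the empty word, then $c_1+\cdots+c_s=c_{s+1}+\cdots+c_k$, where $c_h=|w|_{a_h}$.
   Context: $|w|_a$ denotes the number of occurrences of the letter $a$ in $w$. A special factorization of $w$ is a factorization $w=a_1\pi_1a_2\cdots\pi_{k-1}a_k$ where the set of letters occurring in $w$ is $\{a_1<\cdots<a_k\}$ and $\pi_1,\dots,\pi_{k-1}$ are words; it is palindromic if every $\pi_i$ is a palindrome. Lexicographic order: a proper prefix is smaller. A Lyndon word is a primitive word strictly smaller than its other conjugates. For a primitive word $v$ of length $n$ with conjugates $v_1<\cdots<v_n$, $\mathrm{bw}(v)$ is the word formed by the last letters of $v_1,\dots,v_n$; $v$ is perfectly clustering if $\mathrm{bw}(v)$ is weakly decreasing. *)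

(* Defs.v *)
From mathcomp Require Import all_boot all_order.
Set Implicit Arguments. Unset Strict Implicit. Unset Printing Implicit Defensive.
Import Order.TTheory.
Local Open Scope order_scope.

Section Words.
Variables (d : Order.disp_t) (T : orderType d).

Fixpoint lexlt (u v : seq T) : bool :=
  match u, v with
  | [::], [::] => false
  | [::], _ :: _ => true
  | _ :: _, [::] => false
  | x :: u', y :: v' => (x < y) || ((x == y) && lexlt u' v')
  end.

Definition lexle (u v : seq T) : bool := (u == v) || lexlt u v.

Definition primitive (v : seq T) : Prop :=
  ~ exists (u : seq T) (n : nat), (1 < n)%N /\ v = flatten (nseq n u).

Definition conjugates (v : seq T) : seq (seq T) :=
  [seq rot i v | i <- iota 0 (size v)].

Definition lyndon (v : seq T) : Prop :=
  primitive v /\ forall u, u \in conjugates v -> u != v -> lexlt v u.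

Definition bw (v : seq T) : seq T :=
  match v with
  | [::] => [::]
  | x :: _ => [seq last x u | u <- sort lexle (conjugates v)]
  end.

Definition perfectly_clustering (v : seq T) : Prop :=
  primitive v /\ sorted (fun x y : T => y <= x) (bw v).

(* the word a_1 pi_1 a_2 ... pi_{k-1} a_k, for a = [a_1;...;a_k], pis = [pi_1;...;pi_{k-1}] *)
Definition interleave (a : seq T) (pis : seq (seq T)) : seq T :=
  match a with
  | [::] => [::]
  | a1 :: rest => a1 :: flatten [seq p.1 ++ [:: p.2] | p <- zip pis rest]
  end.

Definition special_factorization (w a : seq T) (pis : seq (seq T)) : Prop :=
  [/\ sorted (fun x y : T => x < y) a,
      (forall x, (x \in a) = (x \in w)),
      size pis = (size a).-1 &
      w = interleave a pis].

Definition palindromic_factorization (w a : seq T) (pis : seq (seq T)) : Prop :=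
  special_factorization w a pis /\ all (fun p => p == rev p) pis.

End Words.

(* Main.v *)
Require Import Defs.
From mathcomp Require Import all_boot all_order zify.
Set Implicit Arguments. Unset Strict Implicit. Unset Printing Implicit Defensive.
Import Order.TTheory.

Lemma lexlt_cons (d : Order.disp_t) (T : orderType d) (x y : T) u v :
  lexlt (x :: u) (y :: v) = (x < y)%O || ((x == y) && lexlt u v).
Proof. by []. Qed.

Lemma lexlt_irr (d : Order.disp_t) (T : orderType d) (u : seq T) : lexlt u u = false.
Proof. by elim: u => //= x u ->; rewrite ltxx eqxx. Qed.

Lemma lexlt_trans (d : Order.disp_t) (T : orderType d) (u v w : seq T) :
  lexlt u v -> lexlt v w -> lexlt u w.
Proof.
elim: u v w => [|x u IH] [|y v] [|z w] //=.
case/orP=> [xy|/andP[/eqP-> uv]]; case/orP=> [yz|/andP[/eqP<- vw]].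
- by rewrite (lt_trans xy yz).
- by rewrite xy.
- by rewrite yz.
- by rewrite eqxx (IH _ _ uv vw) orbT.
Qed.

Lemma lexlt_total (d : Order.disp_t) (T : orderType d) (u v : seq T) :
  u != v -> lexlt u v || lexlt v u.
Proof.
elim: u v => [|x u IH] [|y v] //=.
case: (ltgtP x y) => //= ->; rewrite eqseq_cons eqxx /=. idtac.
exact: IH.
Qed.

Lemma lexlt_asym (d : Order.disp_t) (T : orderType d) (u v : seq T) :
  lexlt u v -> lexlt v u = false.
Proof.
move=> uv; apply/negbTE/negP=> vu.
by have := lexlt_trans uv vu; rewrite lexlt_irr.
Qed.

Lemma lexle_total (d : Order.disp_t) (T : orderType d) : total (@lexle d T).
Proof.
move=> u v; rewrite /lexle; case: (eqVneq u v) => [->|/lexlt_total]; first by rewrite ?eqxx.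
by case/orP=> ->; rewrite ?orbT.
Qed.

Lemma lexle_trans (d : Order.disp_t) (T : orderType d) : transitive (@lexle d T).
Proof.
move=> v u w; rewrite /lexle; case: (eqVneq u v) => [->//|_] /= uv.
case: (eqVneq v w) => [<-|_] /=; first by rewrite uv orbT.
by move=> vw; rewrite (lexlt_trans uv vw) orbT.
Qed.

Lemma lexlt_rcons (d : Order.disp_t) (T : orderType d) (u v : seq T) x :
  size u = size v -> lexlt (rcons u x) (rcons v x) = lexlt u v.
Proof.
elim: u v => [|y u IH] [|z v] //=; first by rewrite /= ltxx eqxx.
by case=> /IH ->.
Qed.

Lemma comm_pow (T : Type) k (u v : seq T) : size u + size v <= k -> u ++ v = v ++ u ->
  exists z a b, u = flatten (nseq a z) /\ v = flatten (nseq b z).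
Proof.
elim: k u v => [|k IH] u v.
  case: u => [|//] ; case: v => [|//] _ _; by exists [::], 0, 0.
case: u => [|x u']; first by move=> _ _; exists v, 0, 1; rewrite /= cats0.
case: v => [|y v']; first by move=> _ _; exists (x :: u'), 1, 0; rewrite /= cats0.
set u := x :: u'; set v := y :: v' => Hs E.
have [le|lt] := leqP (size u) (size v).
- have Hv : v = u ++ drop (size u) v.
    have : take (size u) (u ++ v) = take (size u) (v ++ u) by rewrite E.
    by rewrite take_size_cat // takel_cat // => Hu; rewrite {1}Hu cat_take_drop.
  set v2 := drop (size u) v in Hv.
  have E2 : u ++ v2 = v2 ++ u.
    by move: E; rewrite {1}Hv Hv -catA => /(congr1 (drop (size u))); rewrite !drop_size_cat.
  have Hs2 : size u + size v2 <= k.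
    by move: Hs; rewrite Hv size_cat /=; lia.
  have [z [a [b [Hu Hv2]]]] := IH _ _ Hs2 E2.
  by exists z, a, (a + b); rewrite Hv nseqD flatten_cat -Hu -Hv2.
- have Hu : u = v ++ drop (size v) u.
    have : take (size v) (u ++ v) = take (size v) (v ++ u) by rewrite E.
    by rewrite takel_cat ?(ltnW lt) // take_size_cat // => Hv; rewrite -{1}Hv cat_take_drop.
  set u2 := drop (size v) u in Hu.
  have E2 : u2 ++ v = v ++ u2.
    by move: E; rewrite {1}Hu Hu -catA => /(congr1 (drop (size v))); rewrite !drop_size_cat.
  have Hs2 : size u2 + size v <= k.
    by move: Hs; rewrite Hu size_cat /=; lia.
  have [z [a [b [Hu2 Hv2]]]] := IH _ _ Hs2 E2.
  by exists z, (b + a), b; rewrite Hu nseqD flatten_cat -Hu2 -Hv2.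
Qed.

Lemma rot_id_pow (T : Type) (w : seq T) k : 0 < k < size w -> rot k w = w ->
  exists z m, 1 < m /\ w = flatten (nseq m z).
Proof.
case/andP=> k0 kn E.
have E2 : take k w ++ drop k w = drop k w ++ take k w by rewrite cat_take_drop -{1}E.
have [z [a [b [Ha Hb]]]] := comm_pow (leqnn _) E2.
have a0 : 0 < a.
  case: a Ha => // /(congr1 size); rewrite size_takel ?(ltnW kn) //= => k0'.
  by move: k0; rewrite k0'.
have b0 : 0 < b.
  case: b Hb => // /(congr1 size); rewrite size_drop /= => e.
  by move: kn; rewrite -subn_gt0 e.
exists z, (a + b); split; first by lia.
by rewrite nseqD flatten_cat -Ha -Hb cat_take_drop.
Qed.

Lemma conj_uniq (d : Order.disp_t) (T : orderType d) (w : seq T) :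
  primitive w -> uniq (conjugates w).
Proof.
move=> Hp; rewrite /conjugates map_inj_in_uniq ?iota_uniq //.
have key : forall i j, i < j < size w -> rot i w = rot j w -> False.
  move=> i j /andP[ij jn] E; apply: Hp.
  have : rot (j - i) (rot i w) = rot i w.
    by rewrite -rotD ?subnK ?(ltnW ij) // (ltnW jn).
  move=> E'.
  have E3 : rot (j - i) w = w.
    have -> : w = rotr i (rot i w) by rewrite rotK.
    by rewrite rot_rotr E'.
  apply: (@rot_id_pow _ _ (j - i)) => //; lia.
move=> i j; rewrite !mem_iota /= !add0n => Hi Hj E.
case: (ltngtP i j) => // [ij|ji].
- by case: (key i j) => //; rewrite ij.
- by case: (key j i) => //; rewrite ji.
Qed.

Lemma size_conj (d : Order.disp_t) (T : orderType d) (w v : seq T) : v \in conjugates w -> size v = size w.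
Proof. by case/mapP=> i _ ->; rewrite size_rot. Qed.

Lemma rot_in_conj (d : Order.disp_t) (T : orderType d) (w : seq T) t : t < size w -> rot t w \in conjugates w.
Proof. by move=> tn; apply/mapP; exists t => //; rewrite mem_iota. Qed.

Lemma rot_nth (T : Type) (x0 : T) (w : seq T) t : t < size w ->
  rot t w = nth x0 w t :: behead (rot t w).
Proof.
move=> tn; rewrite /rot; case E: (drop t w) => [|y s] /=.
  by move: tn; rewrite -subn_gt0 -size_drop E.
by rewrite -[t]addn0 -nth_drop E.
Qed.

Lemma count_head (d : Order.disp_t) (T : orderType d) (x0 : T) (w : seq T) (P : pred T) :
  count (fun v => P (head x0 v)) (conjugates w) = count P w.
Proof.
rewrite /conjugates count_map.
rewrite -[in RHS](mkseq_nth x0 w) /mkseq count_map; apply: eq_in_count => i.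
rewrite mem_iota add0n /= => tn.
by rewrite (rot_nth x0 tn).
Qed.

Lemma conj_rot1 (d : Order.disp_t) (T : orderType d) (w : seq T) : 0 < size w ->
  perm_eq (map (rot 1) (conjugates w)) (conjugates w).
Proof.
case: w => [//|x w'] _; set w := x :: w'.
have -> : map (rot 1) (conjugates w) = rot 1 (conjugates w).
  rewrite /conjugates -map_rot -map_comp /= rot1_cons.
  rewrite map_rcons rot0.
  transitivity (map (rot^~ w) (iota 1 (size w').+1)).
    rewrite /=; congr (_ :: _).
    rewrite (iotaDl 1 1) -map_comp. apply/eq_in_map => i.
    rewrite mem_iota => /andP[_ iw] /=.
    by rewrite -rotD // /w /= add1n; lia.
  rewrite -[(size w').+1]addn1 iotaD map_cat cats1 /= add1n.
  by have -> : rot (size w').+1 w = w by rewrite -[(size w').+1]/(size w) rot_size.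
by rewrite perm_rot.
Qed.

Lemma count_rot1 (d : Order.disp_t) (T : orderType d) (w : seq T) (P : pred (seq T)) :
  0 < size w -> count P (conjugates w) = count (fun v => P (rot 1 v)) (conjugates w).
Proof. by move=> w0; rewrite -(permP (conj_rot1 w0)) count_map. Qed.

Lemma rot1_in (d : Order.disp_t) (T : orderType d) (w v : seq T) :
  v \in conjugates w -> rot 1 v \in conjugates w.
Proof.
move=> vc; have w0 : 0 < size w.
  by move: vc; case: w => //.
by rewrite -(perm_mem (conj_rot1 w0)) map_f.
Qed.

Lemma pc_last (d : Order.disp_t) (T : orderType d) (w : seq T) x0 u v :
  perfectly_clustering w -> u \in conjugates w -> v \in conjugates w -> lexlt v u ->
  (last x0 u <= last x0 v)%O.
Proof.
case: w => [|x w'] [_ Hs]; first by [].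
set w := x :: w' => uc vc vu.
have lastE : forall s : seq T, s \in conjugates w -> last x s = last x0 s.
  by move=> s /size_conj; case: s.
rewrite -lastE // -lastE //.
move: Hs; rewrite /bw /w -/w; set S := sort _ _ => Hs.
have uS : u \in S by rewrite mem_sort.
have vS : v \in S by rewrite mem_sort.
have HS : sorted (@lexle d T) S by apply: sort_sorted; apply: lexle_total.
case: (ltngtP (index u S) (index v S)) => [uv|vu'|e].
- have := sorted_ltn_nth (@lexle_trans d T) u HS.
  move=> /(_ (index u S) (index v S)); rewrite !inE !index_mem => /(_ uS vS uv).
  rewrite !nth_index // /lexle; case/orP=> [/eqP E|uv'].
    by move: vu; rewrite E lexlt_irr.
  by move: vu; rewrite lexlt_asym.
- have tr : transitive (fun a b : T => (b <= a)%O).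
    by move=> b a c ab bc; apply: le_trans bc ab.
  have := sorted_ltn_nth tr x Hs.
  move=> /(_ (index v S) (index u S)); rewrite !inE !size_map !index_mem => /(_ vS uS vu').
  by rewrite !(nth_map u) ?index_mem // !nth_index.
- have : nth u S (index u S) = nth u S (index v S) by rewrite e.
  by rewrite !nth_index // => E; move: vu; rewrite E lexlt_irr.
Qed.

Definition rk (d : Order.disp_t) (T : orderType d) (w : seq T) t :=
  count (fun v => lexlt v (rot t w)) (conjugates w).

Lemma count_or (T : Type) (A B : pred T) s : (forall v, A v -> B v -> False) ->
  count (fun v => A v || B v) s = count A s + count B s.
Proof.
move=> H; rewrite -count_predUI.
have -> : count (predI A B) s = 0.
  apply/eqP; rewrite -leqn0 leqNgt -has_count; elim: s => //= v s IH; rewrite negb_or IH andbT; apply/negP => /andP[a b]; exact: (H v a b).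
by rewrite addn0.
Qed.

Definition Cl (d : Order.disp_t) (T : orderType d) (w : seq T) x := count (fun z => (z < x)%O) w.
Definition Gr (d : Order.disp_t) (T : orderType d) (w : seq T) x := count (fun z => (x < z)%O) w.

Lemma rk_dec (d : Order.disp_t) (T : orderType d) (w : seq T) x0 t : t < size w ->
  rk w t = Cl w (nth x0 w t) +
    count (fun v => (head x0 v == nth x0 w t) && lexlt (behead v) (behead (rot t w))) (conjugates w).
Proof.
move=> tn; rewrite /rk /Cl -(@count_head _ _ x0 w) ; rewrite -(count_or (conjugates w)); last first.
  by move=> v /lt_eqF -> .
apply: eq_in_count => v vc.
have : size v = size w by apply: size_conj.
rewrite {1}(rot_nth x0 tn); case: v vc => [|y v'] vc /=; first by move=> e; move: tn; rewrite -e.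
by [].
Qed.

Lemma rk_step (d : Order.disp_t) (T : orderType d) (w : seq T) x0 t :
  perfectly_clustering w -> t.+1 < size w ->
  rk w t.+1 + Cl w (nth x0 w t) = rk w t + Gr w (nth x0 w t).
Proof.
move=> Hpc tn; have tn' : t < size w by apply: ltnW.
have w0 : 0 < size w by apply: leq_ltn_trans tn.
rewrite (rk_dec x0 tn') addnC -addnA; congr (_ + _).
rewrite /rk /Gr count_rot1 // -(@count_head _ _ x0 w) addnC -(count_or (conjugates w)); last first.
  by move=> v /gt_eqF; rewrite eq_sym => ->.
set x := nth x0 w t; set u' := behead (rot t w).
have Erot : rot t.+1 w = rcons u' x by rewrite rotS // (rot_nth x0 tn') rot1_cons.
have su : size u' = (size w).-1 by rewrite /u' size_behead size_rot.
have rc : rcons u' x \in conjugates w by rewrite -Erot rot_in_conj.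
apply: eq_in_count => v vc.
have sv : size v = size w by apply: size_conj.
have r1 := rot1_in vc.
rewrite Erot; case: v vc sv r1 => [|y v'] vc sv r1 /=; first by move: w0; rewrite -sv.
rewrite rot1_cons in r1 *.
have sv' : size v' = size u' by rewrite su -sv.
case: (ltgtP x y) => [xy|yx|<-] /=.
- case: (eqVneq (rcons v' y) (rcons u' x)) => [E|ne].
    by move: (congr1 (last x0) E); rewrite !last_rcons => E'; move: xy; rewrite E' ltxx.
  case/orP: (lexlt_total ne) => // H.
  have := pc_last x0 Hpc r1 rc H; rewrite !last_rcons => yx.
  by move: (lt_le_trans xy yx); rewrite ltxx.
- apply/negP => H.
  have := pc_last x0 Hpc rc r1 H; rewrite !last_rcons => xy.
  by move: (lt_le_trans yx xy); rewrite ltxx.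
- by rewrite ?eqxx ?ltxx lexlt_rcons.
Qed.

Lemma rk_lb (d : Order.disp_t) (T : orderType d) (w : seq T) x0 t : t < size w ->
  Cl w (nth x0 w t) <= rk w t.
Proof. by move=> tn; rewrite (rk_dec x0 tn) leq_addr. Qed.

Lemma rk0 (d : Order.disp_t) (T : orderType d) (w : seq T) : lyndon w -> rk w 0 = 0.
Proof.
case=> _ H; rewrite /rk rot0; apply/eqP; rewrite -leqn0 leqNgt -has_count.
apply/hasPn => v vc /=; case: (eqVneq v w) => [->|ne]; first by rewrite lexlt_irr.
by rewrite lexlt_asym // H.
Qed.

Lemma count_as_sum (T : Type) (P : pred T) (l : seq T) :
  count P l = \sum_(v <- l) (P v : nat).
Proof. by elim: l => [|v l IH]; rewrite ?big_nil ?big_cons //= IH. Qed.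

Lemma sum_ranks (d : Order.disp_t) (T : orderType d) (l : seq (seq T)) : uniq l ->
  2 * \sum_(u <- l) count (fun v => lexlt v u) l = size l * (size l).-1.
Proof.
move=> Hu.
under eq_bigr do rewrite count_as_sum.
rewrite mul2n -addnn {2}exchange_big /= -big_split /=.
transitivity (\sum_(u <- l) (size l).-1); last first.
  by rewrite big_const_seq count_predT iter_addn_0 mulnC.
rewrite big_seq_cond [in RHS]big_seq_cond; apply: eq_bigr => u /andP[ul _].
rewrite -big_split /=.
transitivity (\sum_(v <- l) ((v != u) : nat)).
  apply: eq_bigr => v _.
  case: (eqVneq v u) => [->|ne]; first by rewrite lexlt_irr.
  by case/orP: (lexlt_total ne) => H; rewrite H lexlt_asym.
rewrite -count_as_sum.
have := count_predC (pred1 u) l; rewrite count_uniq_mem // ul.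
by move=> <-; rewrite add1n.
Qed.

Lemma GC (d : Order.disp_t) (T : orderType d) (w : seq T) x y : (x < y)%O ->
  size w <= Gr w x + Cl w y.
Proof.
move=> xy; rewrite /Gr /Cl -count_predUI.
rewrite (@eq_count _ _ predT) ?count_predT ?leq_addr //.
move=> z /=; case: (leP z x) => // zx; by rewrite (le_lt_trans zx xy) orbT.
Qed.

Lemma sum_split (F : nat -> nat) a b :
  \sum_(0 <= i < a + b) F i = \sum_(0 <= i < a) F i + \sum_(0 <= i < b) F (a + i).
Proof.
elim: b => [|b IH]; first by rewrite addn0 [X in _ + X]big_geq // addn0.
by rewrite addnS !big_nat_recr //= ?IH ?addnA // leq_addr.
Qed.

Lemma seg_pair (d : Order.disp_t) (T : orderType d) (w : seq T) x0 (rho : nat -> nat)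
  p x pi y rest :
  (forall t, t.+1 < size w -> rho t.+1 + Cl w (nth x0 w t) = rho t + Gr w (nth x0 w t)) ->
  drop p w = x :: pi ++ y :: rest -> pi = rev pi ->
  forall i, i <= size pi ->
  rho (p.+1 + i) + rho (p.+1 + (size pi - i)) = rho p.+1 + rho (p.+1 + size pi).
Proof.
move=> Hst E Hpal.
have Hn : forall k, nth x0 w (p + k) = nth x0 (x :: pi ++ y :: rest) k by move=> k; rewrite -nth_drop E.
have Hsz : p + (size pi).+2 <= size w.
  have := congr1 size E; rewrite size_drop /= size_cat /= => e.
  by lia.
elim=> [|i IH] Hi; first by rewrite addn0 subn0.
have Hi' : i <= size pi by apply: ltnW.
rewrite -(IH Hi').
have s1 := Hst (p.+1 + i) ltac:(lia).
have s2 := Hst (p.+1 + (size pi - i.+1)) ltac:(lia).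
have e1 : nth x0 w (p.+1 + i) = nth x0 pi i.
  by rewrite addSnnS Hn /= nth_cat Hi.
have e2 : nth x0 w (p.+1 + (size pi - i.+1)) = nth x0 pi i.
  rewrite addSnnS Hn /= nth_cat ifT; last by lia.
  by rewrite [in RHS]Hpal nth_rev.
rewrite e1 in s1; rewrite e2 in s2.
rewrite -addnS in s1.
have E3 : (p.+1 + (size pi - i.+1)).+1 = p.+1 + (size pi - i) by lia.
rewrite E3 in s2.
lia.
Qed.

Lemma seg_sum (d : Order.disp_t) (T : orderType d) (w : seq T) x0 (rho : nat -> nat)
  p x pi y rest :
  (forall t, t.+1 < size w -> rho t.+1 + Cl w (nth x0 w t) = rho t + Gr w (nth x0 w t)) ->
  drop p w = x :: pi ++ y :: rest -> pi = rev pi ->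
  2 * \sum_(0 <= i < (size pi).+1) rho (p.+1 + i) =
  (size pi).+1 * (rho p.+1 + rho (p.+1 + size pi)).
Proof.
move=> Hst E Hpal.
rewrite mul2n -addnn {2}big_nat_rev /= -big_split /=.
rewrite -[X in X * _](subn0 (size pi).+1) -sum_nat_const_nat.
apply: eq_big_nat => i /andP[_ Hi].
rewrite add0n subSS (seg_pair Hst E Hpal) //.
Qed.

Lemma segs (d : Order.disp_t) (T : orderType d) (w : seq T) x0 (rho : nat -> nat)
  (Hst : forall t, t.+1 < size w -> rho t.+1 + Cl w (nth x0 w t) = rho t + Gr w (nth x0 w t))
  (Hlb : forall t, t < size w -> Cl w (nth x0 w t) <= rho t)
  (ps : seq (seq T * T)) : forall p x,
  drop p w = x :: flatten [seq q.1 ++ [:: q.2] | q <- ps] ->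
  path (fun a b => (a < b)%O) x (unzip2 ps) ->
  all (fun q => q.1 == rev q.1) ps ->
  size w * size (flatten [seq q.1 ++ [:: q.2] | q <- ps]) <=
     2 * \sum_(0 <= i < size (flatten [seq q.1 ++ [:: q.2] | q <- ps])) rho (p.+1 + i) /\
  forall j, j < size ps -> (nth ([::], x0) ps j).1 = [::] ->
   exists o, [/\ o.+1 < size w, (nth x0 w o < nth x0 w o.+1)%O,
     nth x0 w o.+1 = (nth ([::], x0) ps j).2 &
     2 * rho o.+1 + size w * size (flatten [seq q.1 ++ [:: q.2] | q <- ps]) <=
       size w + 2 * \sum_(0 <= i < size (flatten [seq q.1 ++ [:: q.2] | q <- ps])) rho (p.+1 + i)].
Proof.
elim: ps => [|[pi y] ps IH] p x E Hpath Hall.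
  by split => //= ; rewrite muln0.
move: Hpath Hall => /= /andP[xy Hpath] /andP[/eqP Hpal Hall].
rewrite /= in E *.
set rest := flatten [seq _ | q <- ps] in E *.
have E1 : drop p w = x :: pi ++ y :: rest by rewrite E -catA.
have Hsz : p + (size pi).+2 <= size w.
  have := congr1 size E1; rewrite size_drop /= size_cat /= => e.
  by lia.
have Hn : forall k, nth x0 w (p + k) = nth x0 (x :: pi ++ y :: rest) k by move=> k; rewrite -nth_drop E1.
have E2 : drop (p + (size pi).+1) w = y :: rest.
  by rewrite addnC -drop_drop E1 /= drop_size_cat.
have [IH1 IH2] := IH _ _ E2 Hpath Hall.
rewrite size_cat /= cats1 size_rcons sum_split.
have SS := seg_sum Hst E1 Hpal.
have K1 : rho p.+1 + Cl w x = rho p + Gr w x.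
  by have := Hst p ltac:(lia); rewrite -[p]addn0 Hn.
have K2 : Cl w x <= rho p.
  by have := Hlb p ltac:(lia); rewrite -[p]addn0 Hn.
have K3 : Cl w y <= rho (p.+1 + size pi).
  have := Hlb (p.+1 + size pi) ltac:(lia).
  by rewrite addSnnS Hn /= nth_cat ltnn subnn.
have K4 := GC w xy.
have K : size w <= rho p.+1 + rho (p.+1 + size pi) by lia.
have KK : (size pi).+1 * size w <= (size pi).+1 * (rho p.+1 + rho (p.+1 + size pi)).
  by rewrite leq_mul2l K orbT.
have Esh : forall i, p.+1 + ((size pi).+1 + i) = (p + (size pi).+1).+1 + i by move=> i; lia.
have Esum : \sum_(0 <= i < size rest) rho (p.+1 + ((size pi).+1 + i)) =
   \sum_(0 <= i < size rest) rho ((p + (size pi).+1).+1 + i).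
  by apply: eq_bigr => i _; rewrite Esh.
rewrite Esum.
set S1 := \sum_(0 <= i < _) rho (p.+1 + i) in SS *.
set S2 := \sum_(0 <= i < _) rho ((p + (size pi).+1).+1 + i) in IH1 IH2 *.
set len' := size rest in IH1 IH2 *.
split; first by rewrite mulnDr; lia.
case=> [_|j].
  rewrite /= => pi0.
  have N0 : nth x0 w p = x by rewrite -[p]addn0 Hn.
  have N1 : nth x0 w p.+1 = y by rewrite -addn1 Hn /= pi0.
  exists p; rewrite N0 N1.
  move: SS KK Hsz; rewrite pi0 /= addn0 mul1n => SS KK Hsz.
  split => //; first lia.
  rewrite /= mulnDr; lia.
rewrite /= ltnS => jl pj.
have [o [o1 o2 o3 o4]] := IH2 j jl pj.
exists o; split => //.
rewrite mulnDr; lia.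
Qed.

Lemma sum_count_mem (T : eqType) (l w : seq T) : uniq l ->
  \sum_(x <- l) count_mem x w = count (mem l) w.
Proof.
elim: l => [|x l IH] /=; first by rewrite big_nil; elim: w.
case/andP=> xl ul; rewrite big_cons IH //.
rewrite -(count_or w (A := pred1 x) (B := mem l)).
  by apply: eq_count => z; rewrite /= in_cons.
by move=> v /= /eqP -> xl'; rewrite xl' in xl.
Qed.

Theorem lemma4p7 (d : Order.disp_t) (T : orderType d)
  (w a : seq T) (pis : seq (seq T)) (s : nat) :
  lyndon w -> perfectly_clustering w ->
  palindromic_factorization w a pis ->
  (1 <= s <= (size a).-1)%N ->
  nth [::] pis s.-1 = [::] ->
  (\sum_(x <- take s a) count_mem x w = \sum_(x <- drop s a) count_mem x w)%N.
Proof.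
move=> Hlyn Hpc [[Hsort Hmem Hsize Hw] Hall] /andP[s1 s2] Hpi.
case: a Hsort Hmem Hsize Hw s2 => [|a1 a'] Hsort Hmem Hsize Hw s2; first by move: s1 s2; clear Hpi; case: s.
rewrite /= in Hsize s2.
set x0 := a1.
have Hw' : w = a1 :: flatten [seq q.1 ++ [:: q.2] | q <- zip pis a'] by rewrite Hw.
set n := size w.
have n0 : 0 < n by rewrite /n Hw'.
have Hst : forall t, t.+1 < size w -> rk w t.+1 + Cl w (nth x0 w t) = rk w t + Gr w (nth x0 w t).
  by move=> t tn; apply: rk_step.
have Hlb : forall t, t < size w -> Cl w (nth x0 w t) <= rk w t.
  by move=> t tn; apply: rk_lb.
have E0 : drop 0 w = a1 :: flatten [seq q.1 ++ [:: q.2] | q <- zip pis a'] by rewrite drop0.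
have Hpath : path (fun a b => (a < b)%O) a1 (unzip2 (zip pis a')).
  by rewrite unzip2_zip ?Hsize.
have Hall' : all (fun q => q.1 == rev q.1) (zip pis a').
  by move: Hall; rewrite -{1}(@unzip1_zip _ _ pis a') ?Hsize // all_map.
have [S1 S2] := segs Hst Hlb E0 Hpath Hall'.
have Hlen : size (flatten [seq q.1 ++ [:: q.2] | q <- zip pis a']) = n.-1 by rewrite /n Hw'.
rewrite Hlen in S1 S2.
have Hsum : 2 * \sum_(0 <= i < n.-1) rk w (0.+1 + i) = n * n.-1.
  have U := conj_uniq (proj1 Hlyn).
  have := sum_ranks U.
  rewrite size_map size_iota -/n /conjugates big_map -/(conjugates w).
  have -> : \sum_(j <- iota 0 n) count (fun v => lexlt v (rot j w)) (conjugates w) =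
            \sum_(0 <= j < n) rk w j by rewrite /index_iota subn0.
  move=> H; rewrite -H.
  have Hn1 : n = 1 + n.-1 by lia.
  by rewrite [in RHS]Hn1 sum_split big_nat1 rk0 // add0n.
have Hj : s.-1 < size (zip pis a') by rewrite size_zip Hsize minnn; lia.
have Hpj : (nth ([::], x0) (zip pis a') s.-1).1 = [::] by rewrite nth_zip ?Hsize.
have [o [o1 o2 o3 o4]] := S2 _ Hj Hpj.
rewrite nth_zip ?Hsize //= in o3.
set y := nth x0 a' s.-1 in o3.
set x := nth x0 w o in o2.
have st := Hst o o1.
have lb1 := Hlb o (ltnW o1).
have lb2 := Hlb o.+1 o1.
rewrite o3 in o2 lb2.
have gc := GC w o2.
rewrite -/x in st lb1.
have Hc : 2 * Cl w y = n.
  rewrite -/n in gc. lia.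
set a := x0 :: a' in Hsort Hmem *.
have ua : uniq a := lt_sorted_uniq Hsort.
have ys : y = nth x0 a s by rewrite /y /a; case: (s) s1.
have sa : s < size a by rewrite /a /=; lia.
have Htake : \sum_(z <- take s a) count_mem z w = Cl w y.
  rewrite sum_count_mem ?take_uniq // /Cl; apply: eq_in_count => z zw /=.
  have za : z \in a by rewrite Hmem.
  rewrite in_take // ys -{2}(nth_index x0 za) (lt_sorted_ltn_nth x0 Hsort) //.
  by rewrite inE index_mem.
have Htot : \sum_(z <- take s a) count_mem z w + \sum_(z <- drop s a) count_mem z w = n.
  rewrite -big_cat cat_take_drop sum_count_mem // /n -count_predT.
  by apply: eq_in_count => z zw /=; rewrite Hmem.
lia.
Qed.
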